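(* A tree $T$ that has a vertex $v$ with $\deg(v)\geq 4$, or two distinct vertices $u,v$ with $\deg(u)\geq 3$ and $\deg(v)\geq 3$, is not in $\mathcal{G}^{\rm SSP}$.
   Context: All graphs are finite, simple, undirected. For a graph $G$ on $\{1,\ldots,n\}$, $\mathcal{S}(G)$ is the set of real symmetric $n\times n$ matrices $A=(a_{ij})$ with $a_{ij}\neq0$ iff $\{i,j\}\in E(G)$ for $i\neq j$ (diagonal arbitrary). A real symmetric $A$ has the strong spectral property (SSP) if the only real symmetric $X$ with $A\circ X=0$, $I\circ X=0$, $AX-XA=0$ is $X=0$ ($\circ$ = entrywise product). $\mathcal{G}^{\rm SSP}$ is the set of graphs $G$ such that every matrix in $\mathcal{S}(G)$ has the SSP. *)

(* Defs.v *)
From HB Require Import structures.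
From mathcomp Require Import all_boot all_order all_algebra.
From mathcomp Require Import reals.
Set Implicit Arguments. Unset Strict Implicit. Unset Printing Implicit Defensive.
Import Order.TTheory GRing.Theory Num.Theory.
Local Open Scope ring_scope.

(* A simple graph on vertex set 'I_n (= {0,..,n-1}, relabelling of {1..n})
   is given by a symmetric irreflexive adjacency relation e. *)
Definition simple_graph (n : nat) (e : rel 'I_n) : Prop :=
  symmetric e /\ irreflexive e.

Definition connected_graph (n : nat) (e : rel 'I_n) : Prop :=
  forall x y : 'I_n, connect e x y.

Definition acyclic_graph (n : nat) (e : rel 'I_n) : Prop :=
  forall c : seq 'I_n, uniq c -> (2 < size c)%N -> ~~ cycle e c.

Definition is_tree (n : nat) (e : rel 'I_n) : Prop :=
  connected_graph e /\ acyclic_graph e.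

Definition deg (n : nat) (e : rel 'I_n) (v : 'I_n) : nat := #|[set w | e v w]|.

Definition in_S (R : realType) (n : nat) (e : rel 'I_n) (A : 'M[R]_n) : Prop :=
  A^T = A /\ (forall i j : 'I_n, i != j -> (A i j != 0) = e i j).

Definition SSP (R : realType) (n : nat) (A : 'M[R]_n) : Prop :=
  forall X : 'M[R]_n, X^T = X ->
    map2_mx (fun a x => a * x) A X = 0 ->
    map2_mx (fun a x => a * x) (1%:M : 'M[R]_n) X = 0 ->
    A *m X - X *m A = 0 ->
    X = 0.

Definition in_G_SSP (R : realType) (n : nat) (e : rel 'I_n) : Prop :=
  forall A : 'M[R]_n, in_S e A -> SSP A.

(* Main.v *)
Require Import Defs.
From HB Require Import structures.
From mathcomp Require Import all_boot all_order all_algebra.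
From mathcomp Require Import reals zify.
Set Implicit Arguments. Unset Strict Implicit. Unset Printing Implicit Defensive.
Import Order.TTheory GRing.Theory Num.Theory.

Section G.
Variables (n : nat) (e : rel 'I_n).
Hypothesis esym : symmetric e.
Hypothesis eirr : irreflexive e.
Hypothesis eacyc : acyclic_graph e.

Definition ew (w : 'I_n) : rel 'I_n := fun x y => [&& e x y, x != w & y != w].

Lemma ew_sym w : symmetric (ew w).
Proof. by move=> x y; rewrite /ew esym; case: (x != w); case: (y != w); rewrite ?andbF ?andbT. Qed.

Lemma ew_connect_sym w x y : connect (ew w) x y = connect (ew w) y x.
Proof. by apply: (sym_connect_sym (ew_sym w)). Qed.

Lemma path_ew_all w x p : path (ew w) x p -> all (fun y => y != w) p.
Proof.
elim: p x => [|y p IH] x //= /andP [/and3P [_ _ yw] pp].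
by rewrite yw (IH y pp).
Qed.

Lemma Bne w a k : a != w -> connect (ew w) a k -> k != w.
Proof.
move=> aw /connectP [p pp ->].
elim: p a aw pp => [|y p IH] a aw //= /andP [/and3P [_ _ yw] pp].
exact: IH.
Qed.

Lemma ew_sub w : subrel (ew w) e.
Proof. by move=> x y /and3P []. Qed.

Lemma acyc_nb w a a' : e w a -> e w a' -> a != a' -> ~~ connect (ew w) a a'.
Proof.
move=> ewa ewa' aa'; apply/negP => /connectP [p pp lp].
case: (shortenP pp) lp => p' pp' up' _ lp'.
have aw : a != w by apply/eqP => h; move: ewa; rewrite h eirr.
have allp := path_ew_all pp'.
have wn : w \notin a :: p'.
  rewrite inE negb_or eq_sym aw /=; apply/negP => wp.
  by move/allP: allp => /(_ w wp); rewrite eqxx.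
have := eacyc (c := w :: a :: p').
have U : uniq (w :: a :: p') by rewrite cons_uniq wn up'.
move=> /(_ U).
case: p' pp' up' lp' allp wn U => [|z p'] pp' up' lp' allp wn U.
  by move: lp'; rewrite /= => h; move: aa'; rewrite h eqxx.
move=> /(_ isT); rewrite /= ewa /=.
have H : path e a (rcons (z :: p') w).
  by rewrite rcons_path (sub_path (@ew_sub w) pp') -lp' esym ewa'.
by move: H => /= ->.
Qed.

Lemma transfer w z c k : ~~ connect (ew z) c w -> connect (ew z) c k -> connect (ew w) c k.
Proof.
move=> nw /connectP [p pp ->].
suff H : forall x, connect (ew z) c x -> path (ew z) x p -> connect (ew w) x (last x p).
  by apply: H.
clear pp; elim: p => [|y p IH] x cx /=; first by move=> _; exact: connect0.
move=> /andP [exy pp].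
have cy : connect (ew z) c y by apply: connect_trans cx (connect1 exy).
apply: connect_trans (IH y cy pp).
apply: connect1; rewrite /ew (ew_sub exy).
have xw : x != w by apply/negP => /eqP h; move: cx; rewrite h; apply/negP.
have yw : y != w by apply/negP => /eqP h; move: cy; rewrite h; apply/negP.
by rewrite xw yw.
Qed.

Lemma sep w a z c : e w a -> e z c -> ~~ connect (ew w) a z -> ~~ connect (ew z) c w ->
  (w = z -> a != c) ->
  (forall k, ~~ (connect (ew w) a k && connect (ew z) c k)) /\
  (forall i j, connect (ew w) a i -> connect (ew z) c j -> ~~ e i j).
Proof.
move=> ewa ezc nz nw wz.
have aw : a != w by apply/eqP => h; move: ewa; rewrite h eirr.
have cz : c != z by apply/eqP => h; move: ezc; rewrite h eirr.
have disj : forall k, ~~ (connect (ew w) a k && connect (ew z) c k).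
  move=> k; apply/negP => /andP [ak ck].
  have ck' := transfer nw ck.
  have ac : connect (ew w) a c.
    by apply: connect_trans ak _; rewrite ew_connect_sym.
  have [wz'|wz'] := eqVneq w z.
    subst z; move: (acyc_nb ewa ezc (wz (erefl _))); by rewrite ac.
  have cw : c != w by apply: Bne aw ac.
  move/negP: nz; apply; apply: connect_trans ac (connect1 _).
  by rewrite /ew esym ezc cw eq_sym wz'.
split => // i j ai cj; apply/negP => eij.
have iw : i != w by apply: Bne aw ai.
have jw : j != w by apply/eqP => h; move: cj; rewrite h; apply/negP.
move/negP: (disj j); apply; rewrite cj andbT.
by apply: connect_trans ai (connect1 _); rewrite /ew eij iw jw.
Qed.


Lemma notself w a : e w a -> ~~ connect (ew w) a w.
Proof.
move=> ewa; have aw : a != w by apply/eqP => h; move: ewa; rewrite h eirr.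
by apply/negP => /(Bne aw); rewrite eqxx.
Qed.

Lemma two_not w p q z : e w p -> e w q -> p != q -> connect (ew w) p z -> ~~ connect (ew w) q z.
Proof.
move=> ewp ewq pq pz; apply/negP => qz.
move/negP: (acyc_nb ewp ewq pq); apply; apply: connect_trans pz _.
by rewrite ew_connect_sym.
Qed.

Lemma sep2 w a z c i j : e w a -> e z c -> ~~ connect (ew w) a z -> ~~ connect (ew z) c w ->
  (w = z -> a != c) -> (i == j) || e i j ->
  connect (ew w) a i && connect (ew z) c j = false.
Proof.
move=> ewa ezc nz nw wz ij.
have [disj noe] := sep ewa ezc nz nw wz.
case/orP: ij => [/eqP ->|eij]; first exact/negbTE/disj.
apply/negP => /andP [ai cj]; by move/negP: (noe i j ai cj).
Qed.

Variable R : realType.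
Local Open Scope ring_scope.

Definition Dg (u v k : 'I_n) : nat := #|[set j | [&& e k j, j != u & j != v]]|.
Definition Amat (u v : 'I_n) : 'M[R]_n :=
  \matrix_(i, j) ((e i j)%:R - (i == j)%:R * (Dg u v i)%:R).
Definition vec (w a b : 'I_n) : 'cV[R]_n :=
  \col_k ((connect (ew w) a k)%:R - (connect (ew w) b k)%:R).

Lemma sum_count (P : pred 'I_n) : \sum_j ((P j)%:R : R) = (#|[set j | P j]|)%:R.
Proof.
rewrite -natr_sum; congr (_%:R); rewrite -sum1_card [RHS]big_mkcond /=.
by apply: eq_bigr => j _; rewrite inE; case: (P j).
Qed.

Lemma sum_delta (k : 'I_n) (c : R) : \sum_j ((k == j)%:R * c) = c.
Proof.
rewrite (bigD1 k) //= eqxx mul1r big1 ?addr0 //.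
by move=> j /negbTE; rewrite eq_sym => ->; rewrite mul0r.
Qed.

Lemma F_in u v w a k : e w a -> ~~ connect (ew w) a u -> ~~ connect (ew w) a v ->
  (w = u \/ w = v) -> connect (ew w) a k ->
  [set j | e k j && connect (ew w) a j] = [set j | [&& e k j, j != u & j != v]].
Proof.
move=> ewa nu nv wuv ak.
have aw : a != w by apply/eqP => h; move: ewa; rewrite h eirr.
have kw := Bne aw ak.
apply/setP => j; rewrite !inE; case ekj: (e k j) => //=.
apply/idP/idP.
  move=> aj; apply/andP; split; apply/negP => /eqP h; rewrite h in aj.
    by move/negP: nu.
  by move/negP: nv.
move=> /andP [ju jv]; apply: connect_trans ak (connect1 _).
have jw : j != w by case: wuv => ->.
by rewrite /ew ekj kw jw.
Qed.

Lemma F_out w a k : e w a -> ~~ connect (ew w) a k -> k != w ->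
  [set j | e k j && connect (ew w) a j] = set0.
Proof.
move=> ewa nk kw.
have aw : a != w by apply/eqP => h; move: ewa; rewrite h eirr.
apply/setP => j; rewrite !inE; apply/negP => /andP [ekj aj].
have jw := Bne aw aj.
move/negP: nk; apply; apply: connect_trans aj (connect1 _).
by rewrite /ew esym ekj jw kw.
Qed.

Lemma F_w w a : e w a -> [set j | e w j && connect (ew w) a j] = [set a].
Proof.
move=> ewa; apply/setP => j; rewrite !inE; apply/idP/idP.
  move=> /andP [ewj aj]; apply/negPn/negP => ja.
  by rewrite eq_sym in ja; move/negP: (acyc_nb ewa ewj ja); apply.
by move/eqP ->; rewrite ewa connect0.
Qed.

Lemma Avec u v w a b : (w = u \/ w = v) -> e w a -> e w b -> a != b ->
  ~~ connect (ew w) a u -> ~~ connect (ew w) a v ->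
  ~~ connect (ew w) b u -> ~~ connect (ew w) b v ->
  Amat u v *m vec w a b = 0.
Proof.
move=> wuv ewa ewb ab au av bu bv.
have aw : a != w by apply/eqP => h; move: ewa; rewrite h eirr.
have bw : b != w by apply/eqP => h; move: ewb; rewrite h eirr.
have [disj _] := sep ewa ewb (notself ewa) (notself ewb) (fun _ => ab).
apply/matrixP => k i; rewrite !mxE.
rewrite (eq_bigr (fun j => ((e k j)%:R * ((connect (ew w) a j)%:R - (connect (ew w) b j)%:R)
   - (k == j)%:R * ((Dg u v k)%:R * ((connect (ew w) a k)%:R - (connect (ew w) b k)%:R))) : R));
  last first.
  move=> j _; rewrite !mxE mulrBl; congr (_ - _).
  by case: eqVneq => [->|]; rewrite ?mul1r ?mul0r.
rewrite sumrB sum_delta.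
rewrite (eq_bigr (fun j => (e k j && connect (ew w) a j)%:R - (e k j && connect (ew w) b j)%:R : R));
  last by move=> j _; rewrite mulrBr -!natrM !mulnb.
rewrite sumrB !sum_count.
case ak: (connect (ew w) a k); case bk: (connect (ew w) b k).
- by move: (disj k); rewrite ak bk.
- have kw := Bne aw ak.
  rewrite (F_in ewa au av wuv ak) (F_out ewb (negbT bk) kw) cards0 /=.
  by rewrite !subr0 mulr1 /Dg subrr.
- have kw := Bne bw bk.
  rewrite (F_in ewb bu bv wuv bk) (F_out ewa (negbT ak) kw) cards0 /=.
  by rewrite !sub0r mulrN1 opprK /Dg addrC subrr.
- rewrite /= [0 - 0]subrr mulr0 subr0.
  case: (eqVneq k w) => [->|kw].
    by rewrite !F_w // !cards1 subrr.
  by rewrite (F_out ewa (negbT ak) kw) (F_out ewb (negbT bk) kw) cards0 subrr.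
Qed.


Lemma Amat_sym u v : (Amat u v)^T = Amat u v.
Proof.
apply/matrixP => i j; rewrite !mxE esym.
by case: (eqVneq i j) => [->|ne] //; rewrite !mul0r.
Qed.

Lemma Amat_S u v : in_S e (Amat u v).
Proof.
split; first exact: Amat_sym.
move=> i j ij; rewrite !mxE (negbTE ij) mul0r subr0.
by case: (e i j); rewrite ?oner_eq0 ?eqxx.
Qed.

Lemma noSSP u v w1 a b w2 c d :
  (w1 = u \/ w1 = v) -> e w1 a -> e w1 b -> a != b ->
  (w2 = u \/ w2 = v) -> e w2 c -> e w2 d -> c != d ->
  ~~ connect (ew w1) a u -> ~~ connect (ew w1) a v ->
  ~~ connect (ew w1) b u -> ~~ connect (ew w1) b v ->
  ~~ connect (ew w2) c u -> ~~ connect (ew w2) c v ->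
  ~~ connect (ew w2) d u -> ~~ connect (ew w2) d v ->
  (w1 = w2 -> [/\ a != c, a != d, b != c & b != d]) ->
  ~ SSP (Amat u v).
Proof.
move=> w1uv ew1a ew1b ab w2uv ew2c ew2d cd au av bu bv cu cv du dv w12.
have nw2 : forall p, ~~ connect (ew w1) p u -> ~~ connect (ew w1) p v -> ~~ connect (ew w1) p w2.
  by move=> p pu pv; case: w2uv => ->.
have nw1 : forall p, ~~ connect (ew w2) p u -> ~~ connect (ew w2) p v -> ~~ connect (ew w2) p w1.
  by move=> p pu pv; case: w1uv => ->.
have F : forall i j, (i == j) || e i j ->
   [/\ connect (ew w1) a i && connect (ew w2) c j = false,
       connect (ew w1) a i && connect (ew w2) d j = false,
       connect (ew w1) b i && connect (ew w2) c j = false &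
       connect (ew w1) b i && connect (ew w2) d j = false].
  move=> i j ij; split.
  - by apply: (sep2 ew1a ew2c (nw2 a au av) (nw1 c cu cv) _ ij) => /w12 [].
  - by apply: (sep2 ew1a ew2d (nw2 a au av) (nw1 d du dv) _ ij) => /w12 [].
  - by apply: (sep2 ew1b ew2c (nw2 b bu bv) (nw1 c cu cv) _ ij) => /w12 [].
  - by apply: (sep2 ew1b ew2d (nw2 b bu bv) (nw1 d du dv) _ ij) => /w12 [].
set x := vec w1 a b; set y := vec w2 c d.
have Z : forall i j, (i == j) || e i j -> x i 0 * y j 0 = 0.
  move=> i j /F [h1 h2 h3 h4]; rewrite !mxE mulrBl !mulrBr -!natrM !mulnb.
  by rewrite h1 h2 h3 h4 !subrr.
set X := x *m y^T + y *m x^T.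
have XE : forall i j, X i j = x i 0 * y j 0 + y i 0 * x j 0.
  by move=> i j; rewrite !mxE !big_ord1 !mxE.
have X0 : forall i j, (i == j) || e i j -> X i j = 0.
  move=> i j ij; rewrite XE Z // mulrC Z ?addr0 //.
  by rewrite eq_sym esym.
have Ax : Amat u v *m x = 0 by apply: Avec.
have Ay : Amat u v *m y = 0 by apply: Avec.
move=> /(_ X).
have XT : X^T = X by rewrite /X raddfD /= !trmx_mul !trmxK addrC.
have H3 : Amat u v *m X - X *m Amat u v = 0.
  have yA : y^T *m Amat u v = 0.
    by rewrite -[Amat u v]Amat_sym -trmx_mul Ay trmx0.
  have xA : x^T *m Amat u v = 0.
    by rewrite -[Amat u v]Amat_sym -trmx_mul Ax trmx0.
  rewrite /X mulmxDr mulmxDl !mulmxA Ax Ay -!mulmxA yA xA.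
  by rewrite !mul0mx !mulmx0 !addr0 subrr.
clearbody X.
have H1 : map2_mx (fun a x => a * x) (Amat u v) X = 0.
  apply/matrixP => i j; rewrite !mxE.
  case: (boolP ((i == j) || e i j)) => ij; first by rewrite X0 // mulr0.
  move: ij; rewrite negb_or => /andP [/negbTE -> /negbTE ->].
  by rewrite mul0r subr0 mul0r.
have H2 : map2_mx (fun a x => a * x) (1%:M : 'M[R]_n) X = 0.
  apply/matrixP => i j; rewrite !mxE.
  case: (eqVneq i j) => [->|ij]; first by rewrite X0 ?eqxx // mulr0.
  by rewrite mulr0n mul0r.
move=> /(_ XT H1 H2 H3) /matrixP /(_ a c).
rewrite XE !mxE.
have ca : ~~ connect (ew w1) a c && ~~ connect (ew w1) b c.
  case: (F c c); rewrite ?eqxx // connect0 !andbT => -> _ -> _ //.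
case/andP: ca => /negbTE -> /negbTE ->.
rewrite connect0 (negbTE (acyc_nb ew1b ew1a _)) ?(eq_sym b) //.
rewrite (negbTE (acyc_nb ew2d ew2c _)) ?(eq_sym d) //.
rewrite connect0 /= ?subrr ?subr0 ?mulr0 ?addr0 ?mulr1 => /eqP; by rewrite oner_eq0.
Qed.

End G.

Lemma pick3 (T : finType) (S : {set T}) : (2 < #|S|)%N ->
  exists a b c, [/\ a \in S, b \in S & c \in S] /\ [/\ a != b, a != c & b != c].
Proof.
move=> h.
have /card_gt1P [a [b [aS bS ab]]] : (1 < #|S|)%N by lia.
have : (0 < #|S :\ a :\ b|)%N.
  move: h; rewrite (cardsD1 a S) (cardsD1 b (S :\ a)) aS !inE eq_sym ab bS /=; lia.
case/card_gt0P => c; rewrite !inE => /and3P [cb ca cS].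
exists a, b, c; split; split => //; by rewrite eq_sym.
Qed.

Lemma pick4 (T : finType) (S : {set T}) : (3 < #|S|)%N ->
  exists a b c d, [/\ a \in S, b \in S, c \in S & d \in S] /\
    [/\ a != b, a != c, a != d & [/\ b != c, b != d & c != d]].
Proof.
move=> h.
have /card_gt1P [a [b [aS bS ab]]] : (1 < #|S|)%N by lia.
have : (1 < #|S :\ a :\ b|)%N.
  move: h; rewrite (cardsD1 a S) (cardsD1 b (S :\ a)) aS !inE eq_sym ab bS /=; lia.
case/card_gt1P => c [d []]; rewrite !inE => /and3P [cb ca cS] /and3P [db da dS] cd.
exists a, b, c, d; split; split => //; try by rewrite eq_sym.
split => //; by rewrite eq_sym.
Qed.

Theorem corollary2p8 (R : realType) (n : nat) (e : rel 'I_n) :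
  simple_graph e -> is_tree e ->
  ((exists v : 'I_n, (4 <= deg e v)%N) \/
   (exists u v : 'I_n, u != v /\ (3 <= deg e u)%N /\ (3 <= deg e v)%N)) ->
  ~ in_G_SSP R e.
Proof.
move=> [esym eirr] [_ eacyc] [[v dv] | [u [v [uv [du dv]]]]] HG.
- have [a [b [c [d [[aS bS cS dS] [ab ac ad [bc bd cd]]]]]]] := pick4 dv.
  rewrite !inE in aS bS cS dS.
  have ns := notself eirr.
  apply: (noSSP esym eirr eacyc (R := R) (u := v) (v := v) (w1 := v) (w2 := v) (a := a) (b := b) (c := c) (d := d)
    _ aS bS ab _ cS dS cd); try by [left | rewrite ns].
    by move=> _; split.
  by apply: HG; apply: Amat_S.
- have [a1 [a2 [a3 [[a1S a2S a3S] [a12 a13 a23]]]]] := pick3 du.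
  have [c [d [[cS dS] cd] [cu du']]] : exists c d, [/\ e v c, e v d & c != d] /\
      [/\ ~~ connect (ew e v) c u & ~~ connect (ew e v) d u].
    have [c1 [c2 [c3 [[c1S c2S c3S] [c12 c13 c23]]]]] := pick3 dv.
    rewrite !inE in c1S c2S c3S.
    have tn := two_not esym eirr eacyc.
    case h1: (connect (ew e v) c1 u).
      exists c2, c3; split; split => //.
        by apply: (tn v c1 c2) => //.
      by apply: (tn v c1 c3) => //.
    case h2: (connect (ew e v) c2 u).
      exists c1, c3; split; split => //; first by rewrite h1.
      by apply: (tn v c2 c3) => //.
    by exists c1, c2; split; split => //; rewrite ?h1 ?h2.
  have [a [b [[aS bS] ab] [av bv]]] : exists a b, [/\ e u a, e u b & a != b] /\
      [/\ ~~ connect (ew e u) a v & ~~ connect (ew e u) b v].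
    rewrite !inE in a1S a2S a3S.
    have tn := two_not esym eirr eacyc.
    case h1: (connect (ew e u) a1 v).
      exists a2, a3; split; split => //.
        by apply: (tn u a1 a2) => //.
      by apply: (tn u a1 a3) => //.
    case h2: (connect (ew e u) a2 v).
      exists a1, a3; split; split => //; first by rewrite h1.
      by apply: (tn u a2 a3) => //.
    by exists a1, a2; split; split => //; rewrite ?h1 ?h2.
  have ns := notself eirr.
  apply: (noSSP esym eirr eacyc (R := R) (u := u) (v := v) (w1 := u) (w2 := v) (a := a) (b := b) (c := c) (d := d)
    _ aS bS ab _ cS dS cd) => //; try by [left | right | rewrite ns].
    by move=> h; move: uv; rewrite h eqxx.
  by apply: HG; apply: Amat_S.
Qed.
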